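(* Let $h,n\geq 2$ and let $V<S_h$ be a proper subgroup such that there exists a preference profile $p\in\mathcal{P}$ with $\mathrm{Stab}_{S_h\times\{id\}}(p)\leq V\times\{id\}$. Then $V\times\{id\}$ is an anonymity group with respect to $(h,n)$.
   Context: Permutations compose as $(\sigma\tau)(x)=\sigma(\tau(x))$. Let $H=[h]$, $G=S_h\times S_n$, and $\mathcal{P}=(S_n)^h$ (preference profiles, linear orders on $[n]$ being identified with elements of $S_n$). $G$ acts on $\mathcal{P}$ by $(p^{(\varphi,\psi)})_i=\psi\,p_{\varphi^{-1}(i)}$; for $U\leq G$, $\mathrm{Stab}_U(p)=\{g\in U:p^g=p\}$. A social preference function (SPF) is any function $F:\mathcal{P}\to S_n$. Its symmetry group is $G(F)=\{(\varphi,\psi)\in G: F(p^{(\varphi,\psi)})=\psi F(p)\ \forall p\}$ and its anonymity group is $G_1(F)=G(F)\cap(S_h\times\{id\})$. A subgroup $U\leq S_h\times\{id\}$ is an anonymity group with respect to $(h,n)$ if $U=G_1(F)$ for some SPF $F$. *)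

(* Defs.v *)
From mathcomp Require Import all_boot all_fingroup.
Set Implicit Arguments.
Unset Strict Implicit.
Unset Printing Implicit Defensive.
Local Open Scope group_scope.

(* Preference profiles: h-tuples of linear orders on [n], identified with 'S_n. *)
Definition profile (h n : nat) := {ffun 'I_h -> 'S_n}.

(* Paper composition (sigma tau)(x) = sigma (tau x); in MathComp,
   (s * t) x = t (s x), so sigma o tau = tau * sigma. *)
Definition pcomp n (s t : 'S_n) : 'S_n := t * s.

Definition pact h n (p : profile h n) (g : 'S_h * 'S_n) : profile h n :=
  [ffun i => pcomp g.2 (p (g.1^-1 i))].

Definition Gfull h n : {set 'S_h * 'S_n} := [set: 'S_h * 'S_n].
Definition Sh_id h n : {set 'S_h * 'S_n} := setX [set: 'S_h] [set 1].

Definition Stab h n (U : {set 'S_h * 'S_n}) (p : profile h n) : {set 'S_h * 'S_n} :=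
  [set g in U | pact p g == p].

Definition SPF h n := profile h n -> 'S_n.

Definition symgroup h n (F : SPF h n) : {set 'S_h * 'S_n} :=
  [set g : 'S_h * 'S_n | [forall p : profile h n, F (pact p g) == pcomp g.2 (F p)]].

Definition anongroup h n (F : SPF h n) : {set 'S_h * 'S_n} :=
  symgroup F :&: Sh_id h n.

Definition is_anonymity_group h n (U : {set 'S_h * 'S_n}) : Prop :=
  U \subset Sh_id h n /\ exists F : SPF h n, U = anongroup F.

(* Main.v *)
Require Import Defs.
From mathcomp Require Import all_boot all_fingroup.
Local Open Scope group_scope.

Lemma pactM h n (p : profile h n) (a b : 'S_h) :
  pact (pact p (a, 1)) (b, 1) = pact p (a * b, 1).
Proof.
by apply/ffunP => i; rewrite /pact !ffunE /= invMg permM /Defs.pcomp !mulg1.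
Qed.

Lemma pact1 h n (p : profile h n) : pact p (1, 1) = p.
Proof. by apply/ffunP => i; rewrite /pact ffunE /= invg1 perm1 /Defs.pcomp mulg1. Qed.

Theorem mainTheorem2 (h n : nat) (V : {group 'S_h}) :
  2 <= h -> 2 <= n ->
  V \proper [set: 'S_h] ->
  (exists p : profile h n, Stab (Sh_id h n) p \subset setX V [set 1]) ->
  is_anonymity_group (setX V [set 1 : 'S_n]).
Proof.
move=> _ hn _ [p0 Hst].
case: n hn p0 Hst => [|[|n]] // _ p0 Hst.
set t : 'S_n.+2 := tperm (ord0 : 'I_n.+2) ord_max.
have t1 : t != 1.
  apply/eqP => /permP /(_ ord0); rewrite perm1 /t tpermL => /eqP.
  by rewrite -(inj_eq val_inj).
split.
  by apply/subsetP => -[a b]; rewrite !inE /= => /andP[_ ->].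
pose F (q : profile h n.+2) : 'S_n.+2 :=
  if [exists v in V, pact p0 (v, 1) == q] then 1 else t.
exists F.
apply/setP => -[phi psi]; rewrite !inE /=.
case: (eqVneq psi 1) => [->|]; last by rewrite !andbF.
rewrite !andbT.
have key : forall q, F (pact q (phi, 1)) == Defs.pcomp 1 (F q) =
   ([exists v in V, pact p0 (v, 1) == pact q (phi, 1)] ==
    [exists v in V, pact p0 (v, 1) == q]).
  move=> q; rewrite /F /Defs.pcomp mulg1.
  by do 2 case: ifP => _ //; rewrite ?eqxx // ?(negbTE t1) // eq_sym (negbTE t1).
apply/idP/idP.
  move=> phiV; apply/forallP => q; rewrite key.
  apply/eqP; apply/existsP/existsP => -[v /andP[vV /eqP E]].
    exists (v * phi^-1); rewrite groupM ?groupV //=.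
    by rewrite -pactM E pactM mulgV pact1.
  exists (v * phi); rewrite groupM //=.
  by rewrite -pactM E.
move=> /forallP /(_ p0); rewrite key.
have -> : [exists v in V, pact p0 (v, 1) == p0].
  by apply/existsP; exists 1; rewrite group1 pact1 eqxx.
move=> /eqP /existsP [v /andP[vV /eqP E]].
have : (v * phi^-1, 1) \in Stab (Sh_id h n.+2) p0.
  rewrite !inE eqxx /= ?andbT.
  by rewrite -pactM E pactM mulgV pact1.
move/(subsetP Hst); rewrite !inE /= ?eqxx ?andbT => H.
by rewrite (groupMl _ vV) groupV in H.
Qed.
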